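(* Let $n$ be a positive integer and let $S\subseteq V(Q_n)$ be a set of vertices that are pairwise at distance at most $2$ in $Q_n$. Then either (a) $S\subseteq N_{Q_n}[v]$ for some $v\in V(Q_n)$, or (b) $S$ is the vertex set of a $4$-cycle (square) of $Q_n$, or (c) $S$ consists of four vertices forming one of the two partite sets (color classes of the bipartition) of some subgraph of $Q_n$ isomorphic to $Q_3$.
   Context: $Q_n$ is the $n$-dimensional hypercube: vertices are binary $n$-tuples, two being adjacent iff they differ in exactly one coordinate; distance is the graph distance (Hamming distance). $N_{Q_n}[v]$ is the closed neighborhood of $v$ (i.e., $v$ and its neighbors). *)

(* Defs.v *)
From mathcomp Require Import all_boot.
Set Implicit Arguments. Unset Strict Implicit. Unset Printing Implicit Defensive.

Definition vert (n : nat) := {ffun 'I_n -> bool}.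

(* Hamming distance = graph distance in Q_n. *)
Definition hdist (n : nat) (x y : vert n) : nat := #|[set i | x i != y i]|.

Definition qadj (n : nat) (x y : vert n) : bool := hdist x y == 1.

Definition closed_nbhd (n : nat) (v : vert n) : {set vert n} :=
  [set w | (w == v) || qadj v w].

Definition is_square (n : nat) (S : {set vert n}) : Prop :=
  exists a b c d : vert n,
    [/\ uniq [:: a; b; c; d],
        [&& qadj a b, qadj b c, qadj c d & qadj d a] &
        S = [set a; b; c; d]].

(* Weight parity of a vertex; the two partite sets of Q_m are the vertices
   of even and of odd weight. *)
Definition parity (m : nat) (x : vert m) : bool := odd #|[set i | x i]|.

(* S consists of four vertices forming one of the two partite sets of some
   subgraph of Q_n isomorphic to Q_3: the subgraph is the image of an
   injective adjacency-preserving map f : Q_3 -> Q_n. *)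
Definition is_Q3_half (n : nat) (S : {set vert n}) : Prop :=
  exists (f : vert 3 -> vert n) (b : bool),
    [/\ injective f,
        (forall x y : vert 3, qadj x y -> qadj (f x) (f y)),
        #|S| = 4 &
        S = f @: [set x : vert 3 | parity x == b]].

(* Main.v *)
Require Import Defs.
From mathcomp Require Import all_boot.
From Stdlib Require Import Classical.
Set Implicit Arguments. Unset Strict Implicit. Unset Printing Implicit Defensive.

Lemma card4 (T : finType) (a b c d : T) : uniq [:: a; b; c; d] -> #|[set a; b; c; d]| = 4.
Proof.
move=> U; rewrite -[4]/(size [:: a; b; c; d]) -(card_uniqP U); apply: eq_card => x.
by rewrite !inE !orbA.
Qed.

Lemma hdist_sym n (x y : vert n) : hdist x y = hdist y x.
Proof. by rewrite /hdist; apply: eq_card => i; rewrite !inE eq_sym. Qed.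

Lemma hdist_eq0 n (x y : vert n) : hdist x y = 0 -> x = y.
Proof.
move=> /eqP; rewrite cards_eq0 => /eqP E; apply/ffunP => i.
apply/eqP; apply: contraT => H.
have : i \in [set i | x i != y i] by rewrite inE.
by rewrite E inE.
Qed.

Lemma hdist_xx n (x : vert n) : hdist x x = 0.
Proof. by apply/eqP; rewrite cards_eq0; apply/eqP/setP => i; rewrite !inE eqxx. Qed.

Lemma hdist3 n (x y : vert n) i j k : i != j -> i != k -> j != k ->
  x i != y i -> x j != y j -> x k != y k -> 3 <= hdist x y.
Proof.
move=> ij ik jk hi hj hk.
have -> : 3 = #|[set i; j; k]|.
  rewrite -setUA cardsU1 cards2 !inE jk negb_or ij ik //.
apply: subset_leq_card; apply/subsetP => l; rewrite !inE.
by case/orP => [/orP [] | ] /eqP ->.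
Qed.

Lemma agree2 n (x y : vert n) i j : hdist x y <= 2 -> i != j -> x i != y i -> x j != y j ->
  forall k, k != i -> k != j -> x k = y k.
Proof.
move=> H ij hi hj k ki kj; apply/eqP; apply: contraT => hk.
have ik : i != k by rewrite eq_sym.
have jk : j != k by rewrite eq_sym.
have := hdist3 ij ik jk hi hj hk.
by rewrite ltnNge H.
Qed.

Lemma hdist_le1 n (x y : vert n) k : (forall i, i != k -> x i = y i) -> hdist x y <= 1.
Proof.
move=> H; rewrite -(cards1 k); apply: subset_leq_card; apply/subsetP => i.
rewrite !inE; apply: contraR => ik; by rewrite H.
Qed.

Lemma hdist_one n (x y : vert n) k : x k != y k -> (forall i, i != k -> x i = y i) -> hdist x y = 1.
Proof.
move=> hk H; apply/eqP; rewrite eqn_leq (hdist_le1 H) /= card_gt0.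
by apply/set0Pn; exists k; rewrite inE.
Qed.

Lemma nbhd_le1 n (v w : vert n) : hdist v w <= 1 -> w \in closed_nbhd v.
Proof.
rewrite leq_eqVlt ltnS leqn0 => /orP [] H; rewrite inE /qadj ?H ?orbT //.
by rewrite (hdist_eq0 (eqP H)) eqxx.
Qed.

Definition flip n (x : vert n) (a : 'I_n) : vert n := [ffun i => if i == a then ~~ x i else x i].

Lemma hdist_flip n (x0 z : vert n) a : x0 a != z a -> hdist (flip x0 a) z = (hdist x0 z).-1.
Proof.
move=> ha; rewrite /hdist (cardsD1 a [set i | x0 i != z i]) inE ha /=.
apply: eq_card => i; rewrite !inE ffunE.
case: (i =P a) => [->|//] /=; by case: (x0 a) (z a) ha => [] [].
Qed.

Lemma flip_adj n (x0 : vert n) a : hdist (flip x0 a) x0 = 1.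
Proof.
apply: (hdist_one (k := a)); first by rewrite ffunE eqxx; case: (x0 a).
by move=> i /negbTE ia; rewrite ffunE ia.
Qed.

Lemma same_pattern n (x0 w y : vert n) : (forall k, (x0 k == w k) = (x0 k == y k)) -> w = y.
Proof.
move=> H; apply/ffunP => k; move: (H k); by case: (x0 k) (w k) (y k) => [] [] [].
Qed.

Lemma neq_ex n (x y : vert n) : x != y -> exists d, x d != y d.
Proof.
move=> H; apply/existsP; apply: contraR H => /existsPn H; apply/eqP/ffunP => i.
by move: (H i); rewrite negbK => /eqP.
Qed.

Lemma le1_or_two n (x y : vert n) : hdist x y <= 1 \/ exists i j, [/\ i != j, x i != y i & x j != y j].
Proof.
case: (leqP (hdist x y) 1) => H; [by left | right].
case/card_gt1P: H => i [j [hi hj ij]]; exists i, j; move: hi hj; rewrite !inE; done.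
Qed.

Definition o0 : 'I_3 := @Ordinal 3 0 isT.
Definition o1 : 'I_3 := @Ordinal 3 1 isT.
Definition o2 : 'I_3 := @Ordinal 3 2 isT.

Definition g (p q r : bool) : vert 3 := [ffun k : 'I_3 => nth false [:: p; q; r] k].

Lemma gE (x : vert 3) : x = g (x o0) (x o1) (x o2).
Proof.
apply/ffunP => k; rewrite ffunE.
case: k => [[|[|[|k]]] Hk] //=; by congr (x _); apply: val_inj.
Qed.

Lemma parity_g p q r : parity (g p q r) = p (+) q (+) r.
Proof.
rewrite /parity -sum1_card big_mkcond /= !big_ord_recl big_ord0 !inE !ffunE /=.
by case: p; case: q; case: r.
Qed.

Definition phi n (a b c : 'I_n) (k : 'I_3) : 'I_n :=
  if val k == 0 then a else if val k == 1 then b else c.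

Lemma phi_inj n (a b c : 'I_n) : a != b -> a != c -> b != c -> injective (phi a b c).
Proof.
move=> ab ac bc k k'; rewrite /phi.
case: k => [[|[|[|k]]] Hk] //; case: k' => [[|[|[|k']]] Hk'] //= E;
  try (by apply: val_inj); by move: ab ac bc; rewrite E ?eqxx.
Qed.

Definition femb n (x0 : vert n) (a b c : 'I_n) (x : vert 3) : vert n :=
  [ffun j => if j == a then x0 j (+) x o0 else if j == b then x0 j (+) x o1
             else if j == c then x0 j (+) x o2 else x0 j].

Lemma femb_dist n (x0 : vert n) (a b c : 'I_n) : a != b -> a != c -> b != c ->
  forall x y, hdist (femb x0 a b c x) (femb x0 a b c y) = hdist x y.
Proof.
move=> ab ac bc x y; rewrite /hdist -(card_imset _ (phi_inj ab ac bc)).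
apply: eq_card => j; rewrite inE !ffunE.
have Ha : a = phi a b c o0 by [].
have Hb : b = phi a b c o1 by [].
have Hc : c = phi a b c o2 by [].
case: (j =P a) => [->|ja].
  by rewrite {3}Ha (mem_imset _ _ (phi_inj ab ac bc)) inE; case: (x0 a); case: (x o0); case: (y o0).
case: (j =P b) => [->|jb].
  by rewrite {3}Hb (mem_imset _ _ (phi_inj ab ac bc)) inE; case: (x0 b); case: (x o1); case: (y o1).
case: (j =P c) => [->|jc].
  by rewrite {3}Hc (mem_imset _ _ (phi_inj ab ac bc)) inE; case: (x0 c); case: (x o2); case: (y o2).
rewrite eqxx /=; apply/esym/negbTE; apply/imsetP => [[k _ E]].
move: E; rewrite /phi; case: k => [[|[|[|k]]] Hk] //= E;
  first [exact: (False_ind _ (ja E)) | exact: (False_ind _ (jb E)) | exact: (False_ind _ (jc E))].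
Qed.

Lemma femb_inj n (x0 : vert n) (a b c : 'I_n) : a != b -> a != c -> b != c ->
  injective (femb x0 a b c).
Proof.
move=> ab ac bc x y E; apply: hdist_eq0; rewrite -(femb_dist x0 ab ac bc) E; exact: hdist_xx.
Qed.

Lemma fg_eq n (x0 w : vert n) (a b c : 'I_n) p q r : a != b -> a != c -> b != c ->
  (x0 a == w a) = ~~ p -> (x0 b == w b) = ~~ q -> (x0 c == w c) = ~~ r ->
  (forall k, k != a -> k != b -> k != c -> x0 k = w k) ->
  w = femb x0 a b c (g p q r).
Proof.
move=> ab ac bc ha hb hc ho; apply: (@same_pattern _ x0) => k; rewrite !ffunE /=.
case: (k =P a) => [->|ka]; first by rewrite {}ha; case: p; case: (x0 a).
case: (k =P b) => [->|kb]; first by rewrite {}hb; case: q; case: (x0 b).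
case: (k =P c) => [->|kc]; first by rewrite {}hc; case: r; case: (x0 c).
rewrite ho ?eqxx //; by apply/eqP.
Qed.

Lemma bA (p q r : bool) : p = q -> p != r -> q != r. Proof. by move=> <-. Qed.
Lemma bB (p q r : bool) : p != q -> p != r -> q = r. Proof. by case: p q r => [] [] []. Qed.
Lemma bC (p q r : bool) : p != q -> p = r -> q != r. Proof. by case: p q r => [] [] []. Qed.
Lemma neq_at n (x y : vert n) k : x k != y k -> x != y.
Proof. by apply: contraNN => /eqP ->. Qed.

Lemma no3 n (x y : vert n) i j k : hdist x y <= 2 -> i != j -> i != k -> j != k ->
  x i != y i -> x j != y j -> x k != y k -> False.
Proof. by move=> H ij ik jk hi hj hk; have := hdist3 ij ik jk hi hj hk; rewrite ltnNge H. Qed.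

Lemma noZ n (S : {set vert n}) x0 a b :
  (forall x y, x \in S -> y \in S -> hdist x y <= 2) -> x0 \in S -> a != b ->
  (forall z, z \in S -> forall k, k != a -> k != b -> x0 k = z k) ->
  (forall z, z \in S -> x0 a != z a -> x0 b != z b) ->
  exists v, S \subset closed_nbhd v.
Proof.
move=> H x0S ab Hag Hz; exists (flip x0 b); apply/subsetP => z zS; apply: nbhd_le1.
case: (boolP (x0 b != z b)) => hb.
  by rewrite hdist_flip //; move: (H x0 z x0S zS); case: (hdist x0 z) => [|[|[|m]]].
have -> : z = x0.
  apply: (@same_pattern _ x0) => k; rewrite eqxx.
  case: (k =P a) => [->|ka]; first by apply/negP => /negP hza; rewrite (Hz z zS hza) in hb.
  case: (k =P b) => [->|kb]; first by rewrite negbK in hb.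
  by rewrite (Hag z zS) //; apply/eqP.
by rewrite flip_adj.
Qed.

Lemma case2b n (S : {set vert n}) x0 y1 y2 a b c :
  (forall x y, x \in S -> y \in S -> hdist x y <= 2) ->
  x0 \in S -> y1 \in S -> y2 \in S -> a != b -> a != c -> b != c ->
  x0 a != y1 a -> x0 b != y1 b -> x0 a != y2 a -> x0 c != y2 c ->
  (exists v, S \subset closed_nbhd v) \/ is_Q3_half S.
Proof.
move=> H x0S y1S y2S ab ac bc h1a h1b h2a h2c.
have P1 := agree2 (H _ _ x0S y1S) ab h1a h1b.
have P2 := agree2 (H _ _ x0S y2S) ac h2a h2c.
have Key : forall w, w \in S -> x0 a = w a -> w != x0 -> x0 b != w b /\ x0 c != w c.
  move=> w wS hwa wx; case: (neq_ex wx) => d hd.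
  have da : d != a by apply: contraNneq hd => ->; rewrite hwa.
  split.
    apply/negP => /eqP hwb.
    have db : d != b by apply: contraNneq hd => ->; rewrite hwb.
    apply: (no3 (H _ _ wS y1S) ab (k := d));
      first [by rewrite eq_sym | by rewrite -hwa | by rewrite -hwb | by rewrite -P1].
  apply/negP => /eqP hwc.
  have dc : d != c by apply: contraNneq hd => ->; rewrite hwc.
  apply: (no3 (H _ _ wS y2S) ac (k := d));
    first [by rewrite eq_sym | by rewrite -hwa | by rewrite -hwc | by rewrite -P2].
case: (classic (exists y3, [/\ y3 \in S, x0 a = y3 a & y3 != x0])) => [[y3 [y3S h3a y3x]] | none]; last first.
  left; exists (flip x0 a); apply/subsetP => z zS; apply: nbhd_le1.
  case: (boolP (x0 a != z a)) => ha.
    by rewrite hdist_flip //; move: (H x0 z x0S zS); case: (hdist x0 z) => [|[|[|m]]].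
  have -> : z = x0.
    apply/eqP; apply: contraT => zx; case: none; exists z; split => //; exact/eqP/negPn.
  by rewrite flip_adj.
case: (Key y3 y3S h3a y3x) => h3b h3c.
have P3 := agree2 (H _ _ x0S y3S) bc h3b h3c.
have ba : b != a by rewrite eq_sym.
have ca : c != a by rewrite eq_sym.
have cb : c != b by rewrite eq_sym.
set f := femb x0 a b c.
have e0 : x0 = f (g false false false).
  apply: fg_eq => //; try by rewrite eqxx.
have e1 : y1 = f (g true true false).
  apply: fg_eq => //.
  - by rewrite (negbTE h1a).
  - by rewrite (negbTE h1b).
  - by rewrite P1 // eqxx.
  - by move=> k ka kb kc; apply: P1.
have e2 : y2 = f (g true false true).
  apply: fg_eq => //.
  - by rewrite (negbTE h2a).
  - by rewrite P2 // eqxx.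
  - by rewrite (negbTE h2c).
  - by move=> k ka kb kc; apply: P2.
have e3 : y3 = f (g false true true).
  apply: fg_eq => //.
  - by rewrite h3a eqxx.
  - by rewrite (negbTE h3b).
  - by rewrite (negbTE h3c).
  - by move=> k ka kb kc; apply: P3.
have HS : S = [set x0; y1; y2; y3].
  apply/setP => w; rewrite !inE; apply/idP/idP; last first.
    by case/orP => [/orP [/orP [] | ] | ] /eqP ->.
  move=> wS.
  case: (boolP (x0 a == w a)) => [/eqP hwa | hwa].
    case: (boolP (w == x0)) => [/eqP -> | wx]; first by [].
    case: (Key w wS hwa wx) => hwb hwc.
    have Pw := agree2 (H _ _ x0S wS) bc hwb hwc.
    suff -> : w = y3 by rewrite eqxx !orbT.
    rewrite e3; apply: fg_eq => //.
    - by rewrite hwa eqxx.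
    - by rewrite (negbTE hwb).
    - by rewrite (negbTE hwc).
    - by move=> k ka kb kc; apply: Pw.
  case: (boolP (x0 b != w b)) => hwb.
    have Pw := agree2 (H _ _ x0S wS) ab hwa hwb.
    suff -> : w = y1 by rewrite eqxx !orbT.
    rewrite e1; apply: fg_eq => //.
    - by rewrite (negbTE hwa).
    - by rewrite (negbTE hwb).
    - by rewrite Pw // eqxx.
    - by move=> k ka kb kc; apply: Pw.
  case: (boolP (x0 c != w c)) => hwc.
    have Pw := agree2 (H _ _ x0S wS) ac hwa hwc.
    suff -> : w = y2 by rewrite eqxx !orbT.
    rewrite e2; apply: fg_eq => //.
    - by rewrite (negbTE hwa).
    - by rewrite Pw // eqxx.
    - by rewrite (negbTE hwc).
    - by move=> k ka kb kc; apply: Pw.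
  exfalso; apply: (no3 (H _ _ y3S wS) ab ac bc).
  - by rewrite -h3a.
  - by rewrite -(eqP (negbNE hwb)) eq_sym.
  - by rewrite -(eqP (negbNE hwc)) eq_sym.
right; exists f, false; split.
- exact: femb_inj.
- by move=> x y; rewrite /qadj femb_dist.
- rewrite HS card4 //= !inE !negb_or.
  have n01 : x0 != y1 := neq_at h1a.
  have n02 : x0 != y2 := neq_at h2a.
  have n03 : x0 != y3 := neq_at h3b.
  have n12 : y1 != y2 by apply: (neq_at (k := b)); rewrite -P2 // eq_sym.
  have n13 : y1 != y3 by apply: (neq_at (k := a)); rewrite -h3a eq_sym.
  have n23 : y2 != y3 by apply: (neq_at (k := a)); rewrite -h3a eq_sym.
  by rewrite n01 n02 n03 n12 n13 n23.
- rewrite HS; apply/setP => w; rewrite !inE; apply/idP/imsetP.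
  + case/orP => [/orP [/orP [] | ] | ] /eqP ->.
    * by rewrite {1}e0; exists (g false false false); rewrite // inE parity_g.
    * by rewrite e1; exists (g true true false); rewrite // inE parity_g.
    * by rewrite e2; exists (g true false true); rewrite // inE parity_g.
    * by rewrite e3; exists (g false true true); rewrite // inE parity_g.
  + case => x; rewrite inE => xE ->; rewrite (gE x) in xE *; move: xE; rewrite parity_g.
    by case: (x o0) (x o1) (x o2) => [] [] [] //= _; rewrite -?e0 -?e1 -?e2 -?e3 ?eqxx ?orbT.
Qed.

Lemma pat2 n (x0 w y : vert n) a b :
  (x0 a == w a) = (x0 a == y a) -> (x0 b == w b) = (x0 b == y b) ->
  (forall k, k != a -> k != b -> x0 k = w k) -> (forall k, k != a -> k != b -> x0 k = y k) ->
  w = y.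
Proof.
move=> ha hb hw hy; apply: (@same_pattern _ x0) => k.
case: (k =P a) => [->|ka] //; case: (k =P b) => [->|kb] //.
by rewrite -hw ?eqxx -?hy ?eqxx //; apply/eqP.
Qed.

Unset Implicit Arguments.

Theorem proposition6p4 (n : nat) (S : {set vert n}) :
  0 < n ->
  (forall x y, x \in S -> y \in S -> hdist x y <= 2) ->
  (exists v : vert n, S \subset closed_nbhd v) \/ is_square S \/ is_Q3_half S.
Proof.
move=> _ H; case: (set_0Vmem S) => [-> | [x0 x0S]].
  by left; exists [ffun=> false]; apply: sub0set.
case: (classic (exists y1 a b, [/\ y1 \in S, a != b, x0 a != y1 a & x0 b != y1 b]))
  => [[y1 [a [b [y1S ab h1a h1b]]]] | none]; last first.
  left; exists x0; apply/subsetP => y yS; apply: nbhd_le1.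
  case: (le1_or_two x0 y) => // [[i [j [ij hi hj]]]].
  by case: none; exists y, i, j.
have P1 := agree2 (H _ _ x0S y1S) ab h1a h1b.
have ba : b != a by rewrite eq_sym.
case: (classic (exists y2 c, [/\ y2 \in S, c != a, c != b & x0 c != y2 c]))
  => [[y2 [c [y2S ca cb h2c]]] | none].
  have ac : a != c by rewrite eq_sym.
  have bc : b != c by rewrite eq_sym.
  case: (boolP (x0 a != y2 a)) => h2a.
    by case: (case2b H x0S y1S y2S ab ac bc h1a h1b h2a h2c) => [?|?]; [left | right; right].
  case: (boolP (x0 b != y2 b)) => h2b.
    by case: (case2b H x0S y1S y2S ba bc ac h1b h1a h2b h2c) => [?|?]; [left | right; right].
  exfalso; apply: (no3 (H _ _ y1S y2S) ab ac bc).
  - by rewrite -(eqP (negbNE h2a)) eq_sym.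
  - by rewrite -(eqP (negbNE h2b)) eq_sym.
  - by rewrite -P1.
have Hag : forall z, z \in S -> forall k, k != a -> k != b -> x0 k = z k.
  move=> z zS k ka kb; apply/eqP; apply: contraT => hk; case: none; exists z, k; split => //.
have Hba : forall z, z \in S -> forall k, k != b -> k != a -> x0 k = z k.
  by move=> z zS k kb ka; apply: Hag.
case: (classic (exists za, [/\ za \in S, x0 a != za a & x0 b = za b]))
  => [[za [zaS hza hzab]] | noa]; last first.
  left; apply: (noZ H x0S ab Hag) => z zS hz; apply/negP => /eqP hzb.
  by case: noa; exists z; split.
case: (classic (exists zb, [/\ zb \in S, x0 b != zb b & x0 a = zb a]))
  => [[zb [zbS hzb hzba]] | nob]; last first.
  left; apply: (noZ H x0S ba Hba) => z zS hz; apply/negP => /eqP hza'.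
  by case: nob; exists z; split.
right; left; exists x0, za, y1, zb; split.
- rewrite /= !inE !negb_or.
  have n01 : x0 != za := neq_at hza.
  have n02 : x0 != y1 := neq_at h1a.
  have n03 : x0 != zb := neq_at hzb.
  have n12 : za != y1 by apply: (neq_at (k := b)); rewrite -hzab.
  have n13 : za != zb by apply: (neq_at (k := a)); rewrite -hzba eq_sym.
  have n23 : y1 != zb by apply: (neq_at (k := a)); rewrite -hzba eq_sym.
  by rewrite n01 n02 n03 n12 n13 n23.
- apply/and4P; split; rewrite /qadj; apply/eqP.
  + apply: (hdist_one hza) => i ia; case: (boolP (i == b)) => [/eqP -> // | ib].
    exact: (Hag _ zaS).
  + apply: (hdist_one (k := b)); first by rewrite -hzab.
    move=> i ib; case: (boolP (i == a)) => [/eqP -> | ia]; first exact: bB hza h1a.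
    by rewrite -(Hag za zaS) // P1.
  + apply: (hdist_one (k := a)); first by rewrite -hzba eq_sym.
    move=> i ia; case: (boolP (i == b)) => [/eqP -> | ib]; first exact: bB h1b hzb.
    by rewrite -P1 // (Hag zb zbS).
  + apply: (hdist_one (k := b)); first by rewrite eq_sym.
    move=> i ib; case: (boolP (i == a)) => [/eqP -> | ia]; first by rewrite hzba.
    by rewrite -(Hag zb zbS).
- apply/setP => w; rewrite !inE; apply/idP/idP; last first.
    by case/orP => [/orP [/orP [] | ] | ] /eqP ->.
  move=> wS; have Pw := Hag w wS.
  case: (boolP (x0 a == w a)) => ha; case: (boolP (x0 b == w b)) => hb.
  + suff -> : w = x0 by rewrite eqxx.
    by apply: (pat2 (x0 := x0) (a := a) (b := b)); rewrite ?ha ?hb ?eqxx.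
  + suff -> : w = zb by rewrite eqxx !orbT.
    apply: (pat2 (x0 := x0) (a := a) (b := b)) => //; first by rewrite ha hzba eqxx.
      by rewrite (negbTE hb) (negbTE hzb).
    exact: (Hag _ zbS).
  + suff -> : w = za by rewrite eqxx !orbT.
    apply: (pat2 (x0 := x0) (a := a) (b := b)) => //; first by rewrite (negbTE ha) (negbTE hza).
      by rewrite hb hzab eqxx.
    exact: (Hag _ zaS).
  + suff -> : w = y1 by rewrite eqxx !orbT.
    apply: (pat2 (x0 := x0) (a := a) (b := b)) => //; first by rewrite (negbTE ha) (negbTE h1a).
    by rewrite (negbTE hb) (negbTE h1b).
Qed.
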